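(* Let $C$ be a norm-closed convex bounded subset of $L_1([0,1])$ and let $\tau$ be the topology of convergence in measure on $L_1([0,1])$. Then $H(C,\overline{C}^\tau)\le \operatorname{diam}(C)/2$. Moreover, if $H(C,\overline{C}^\tau)=\operatorname{diam}(C)/2$, then $t(C)=2$.
   Context: $\overline{C}^\tau$ denotes the closure of $C$ in the topology $\tau$ of convergence in measure (Lebesgue measure on $[0,1]$), and $H(A,B)$ denotes the Hausdorff distance (with respect to the $L_1$ norm) between sets $A$ and $B$. The coefficient $t(C)$ is defined by $$t(C)=\inf\Big\{\lambda\ge 0:\ \inf_{c\in C}\limsup_n\|c-x_n\|\le \lambda\limsup_n\|x-x_n\| \text{ for all sequences }(x_n)\subset C \text{ and all } x\in L_1([0,1]) \text{ with } x_n\to x \text{ in } \tau\Big\}.$$ *)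

(* Defs.v *)
(* L_1([0,1]) is modelled by functions R -> R that are
   Lebesgue integrable on `[0,1]; the L_1 (semi)norm distance is computed on
   `[0,1]. Sets of such functions play the role of subsets of L_1. *)
From HB Require Import structures.
From mathcomp Require Import all_boot all_order all_algebra.
From mathcomp Require Import all_classical all_reals all_analysis.
Set Implicit Arguments. Unset Strict Implicit. Unset Printing Implicit Defensive.
Import Order.TTheory GRing.Theory Num.Theory.
Local Open Scope classical_set_scope.
Local Open Scope ring_scope.

Section L1defs.
Variable R : realType.

Definition unit_itv : set R := `[0%R, 1%R].

Definition isL1 (x : R -> R) : Prop :=
  (@lebesgue_measure R).-integrable unit_itv (EFin \o x).

Definition L1dist (f g : R -> R) : \bar R :=
  (\int[@lebesgue_measure R]_(t in unit_itv) (`|f t - g t|)%:E)%E.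

Definition cvg_in_measure (u : nat -> R -> R) (x : R -> R) : Prop :=
  forall eps : R, 0 < eps ->
    (fun n => @lebesgue_measure R (unit_itv `&` [set t | eps < `|u n t - x t|]))
      @ \oo --> 0%E.

(* closure of C in the topology tau of convergence in measure on L_1([0,1])
   (tau is metrizable, so the closure is the sequential closure) *)
Definition tau_closure (C : set (R -> R)) : set (R -> R) :=
  [set x | isL1 x /\ exists u : nat -> R -> R,
             (forall n, C (u n)) /\ cvg_in_measure u x].

Definition norm_closed (C : set (R -> R)) : Prop :=
  forall (u : nat -> R -> R) (x : R -> R), (forall n, C (u n)) -> isL1 x ->
    (fun n => L1dist (u n) x) @ \oo --> 0%E -> C x.

Definition convexC (C : set (R -> R)) : Prop :=
  forall a b : R -> R, C a -> C b -> forall l : R, 0 <= l <= 1 ->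
    C (fun t => l * a t + (1 - l) * b t).

Definition L1bounded (C : set (R -> R)) : Prop :=
  exists M : R, forall c, C c -> (L1dist c (fun _ => 0%R) <= M%:E)%E.

Definition setdist (x : R -> R) (A : set (R -> R)) : \bar R :=
  ereal_inf [set L1dist x a | a in A].

Definition hausdorff (A B : set (R -> R)) : \bar R :=
  maxe (ereal_sup [set setdist a B | a in A])
       (ereal_sup [set setdist b A | b in B]).

Definition diam (C : set (R -> R)) : \bar R :=
  ereal_sup [set d | exists a b, C a /\ C b /\ d = L1dist a b].

Definition t_admissible (C : set (R -> R)) (l : R) : Prop :=
  0 <= l /\
  forall (u : nat -> R -> R) (x : R -> R),
    (forall n, C (u n)) -> isL1 x -> cvg_in_measure u x ->
    (ereal_inf [set limn_esup (fun n => L1dist c (u n)) | c in C]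
       <= l%:E * limn_esup (fun n => L1dist x (u n)))%E.

Definition t_coef (C : set (R -> R)) : \bar R :=
  ereal_inf [set l%:E | l in t_admissible C].

End L1defs.

(* Main.v *)
Require Import Defs.
From mathcomp Require Import all_boot all_order all_algebra.
From mathcomp Require Import all_classical all_reals all_analysis.
From mathcomp Require Import measurable_realfun.
From mathcomp Require Import ring lra.
Import Order.TTheory GRing.Theory Num.Theory.
Import numFieldNormedType.Exports.
Local Open Scope classical_set_scope.
Local Open Scope ring_scope.

Section LS.
Local Open Scope ereal_scope.
Context {R : realType}.
Implicit Types (u v : nat -> \bar R).

Lemma limsupE u : limn_esup u = ereal_inf (range (esups u)).
Proof. by rewrite limn_esup_lim; apply/cvg_lim => //; exact: cvg_esups_inf. Qed.

Lemma LS1 u (M : \bar R) N : (forall n, (N <= n)%N -> u n <= M) -> limn_esup u <= M.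
Proof.
move=> H; rewrite limsupE; apply: (le_trans (ereal_inf_lbound _)).
  by exists N.
by apply: ge_ereal_sup => _ [k /= Nk <-]; exact: H.
Qed.

Lemma LS2 u (M : \bar R) : limn_esup u < M -> exists N, forall n, (N <= n)%N -> u n < M.
Proof.
rewrite limsupE => /ereal_inf_lt[_ [N _ <-]] HN; exists N => n Nn.
apply: le_lt_trans HN; apply: ereal_sup_ubound; by exists n.
Qed.

Lemma LS3 u v (k : R) N : (forall n, (N <= n)%N -> k%:E + v n <= u n) ->
  k%:E + limn_esup v <= limn_esup u.
Proof.
move=> H; rewrite [limn_esup u]limsupE; apply: le_ereal_inf_tmp => _ [m _ <-].
set M := maxn m N.
have le1 : limn_esup v <= esups v M.
  by rewrite limsupE; apply: ereal_inf_lbound; exists M.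
apply: (le_trans (leeD2l _ le1)).
have le2 : esups u M <= esups u m by apply: nonincreasing_esups; rewrite leq_maxl.
apply: le_trans le2.
suff : esups v M <= esups u M - k%:E by rewrite leeBrDl.
apply: ge_ereal_sup => _ [j /= jm <-]. rewrite EFinN leeBrDl //.
idtac; apply: (le_trans (H j _)).
  by apply: leq_trans jm; rewrite leq_maxr.
by apply: ereal_sup_ubound; exists j.
Qed.
Lemma LS0 u (a : \bar R) : (forall n, a <= u n) -> a <= limn_esup u.
Proof.
move=> H; rewrite limsupE; apply: le_ereal_inf_tmp => _ [m _ <-].
apply: (le_trans (H m)); apply: ereal_sup_ubound; exists m => //=.
Qed.
End LS.

Section L1.
Context {R : realType}.
Local Notation mu := (@lebesgue_measure R).
Local Notation D := (@unit_itv R).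

Lemma mD : measurable (D : set (measurableTypeR R)).
Proof. exact: measurable_itv. Qed.

Lemma isL1_meas {f : R -> R} : isL1 f -> measurable_fun D f.
Proof. by move=> /integrableP[/measurable_EFinP]. Qed.

Lemma mabsB (f g : R -> R) : measurable_fun D f -> measurable_fun D g ->
  measurable_fun D (fun t => (`|f t - g t|)%:E).
Proof.
move=> mf mg; apply/measurable_EFinP.
by apply: measurableT_comp => //; exact: measurable_funB.
Qed.

Local Open Scope ereal_scope.

Lemma L1dist_ge0 (f g : R -> R) : 0 <= L1dist f g.
Proof. by apply: integral_ge0 => t _; rewrite lee_fin. Qed.

Lemma L1dist_sym (f g : R -> R) : L1dist f g = L1dist g f.
Proof. by apply: eq_integral => t _; rewrite distrC. Qed.

Lemma L1dist_fin {f g : R -> R} : isL1 f -> isL1 g -> L1dist f g \is a fin_num.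
Proof.
move=> if_ ig; have ifg : isL1 (f \- g)%R.
  exact: (eq_integrable mD _ _ _ (integrableB mD if_ ig)).
rewrite ge0_fin_numE ?L1dist_ge0 //.
move/integrableP: ifg => [_]; apply: le_lt_trans.
by rewrite le_eqVlt; apply/orP; left; apply/eqP; apply: eq_integral.
Qed.

Lemma L1dist_tri (a b c : R -> R) : measurable_fun D a -> measurable_fun D b ->
  measurable_fun D c -> L1dist a c <= L1dist a b + L1dist b c.
Proof.
move=> ma mb mc; rewrite /L1dist -ge0_integralD; first last.
- exact: mabsB.
- by move=> t _; rewrite lee_fin.
- exact: mabsB.
- by move=> t _; rewrite lee_fin.
- exact: mD.
apply: ge0_le_integral.
- exact: mD.
- by move=> t _; rewrite lee_fin.
- exact: mabsB.
- by apply: emeasurable_funD; exact: mabsB.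
move=> t _; rewrite -EFinD lee_fin.
by rewrite (le_trans _ (ler_normD _ _)) // addrA subrK.
Qed.

Lemma ev_lt {u : nat -> \bar R} {l M : R} : u @ \oo --> l%:E -> (l < M)%R ->
  \forall n \near \oo, u n < M%:E.
Proof.
move/fine_cvgP => [finu cu] lM.
have h := cvgr_lt _ cu _ lM.
near=> n.
have fn : u n \is a fin_num by near: n; apply: finu.
have hn : (fine (u n) < M)%R by near: n; apply: h.
by rewrite -(fineK fn) lte_fin.
Unshelve. all: by end_near.
Qed.

Lemma tail_small (g : R -> R) (eta : R) : isL1 g -> (0 < eta)%R ->
  exists2 M : R, (0 <= M)%R &
   (\int[mu]_(t in D) (Num.max (`|g t| - M) 0)%:E <= eta%:E).
Proof.
move=> ig eta0.
have mg := isL1_meas ig.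
pose f_ := fun (n : nat) (t : R) => (Num.max (`|g t| - n%:R) 0)%:E.
have mf_ : forall n, measurable_fun D (f_ n).
  move=> n; apply/measurable_EFinP; apply: measurable_maxr => //.
  by apply: measurable_funB => //; apply: measurableT_comp.
have f_f : forall t, D t -> f_ ^~ t @ \oo --> (cst 0 t).
  move=> t _; apply: cvg_near_cst; near=> n.
  rewrite /f_ /= (_ : Num.max _ _ = 0%R) //; apply/max_idPr.
  rewrite subr_le0; apply: ltW; apply: (lt_le_trans (truncnS_gt _)).
  rewrite ler_nat; near: n; exists (Num.Def.truncn `|g t|).+1 => //.
pose G := fun t => (`|g t|)%R.
have fing : forall t, D t -> ((EFin \o G) t) \is a fin_num by [].
have ig' : mu.-integrable D (EFin \o G).
  exact: (eq_integrable mD _ _ _ (integrable_abse ig)).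
have absfg : forall n t, D t -> `|f_ n t| <= (EFin \o G) t.
  move=> n t _; rewrite /f_ /= lee_fin ger0_norm ?le_max ?lexx ?orbT //.
  rewrite ge_max normr_ge0 andbT lerBlDr lerDl //.
have := dominated_cvg mD mf_ f_f fing ig' absfg.
rewrite integral_cst ?mul0e; last exact: mD.
move/ev_lt => /(_ _ eta0) [N _ HN].
exists N%:R => //; apply: ltW; exact: (HN N (leqnn N)).
Unshelve. all: by end_near.
Qed.

Lemma mAset (h : R -> R) (eps : R) : measurable_fun D h ->
  measurable (D `&` [set t | (eps < `|h t|)%R]).
Proof.
move=> mh; have mh' : measurable_fun D (fun t => `|h t|)%R.
  exact: measurableT_comp.
suff -> : D `&` [set t | (eps < `|h t|)%R] =
          D `&` (fun t => `|h t|)%R @^-1` `]eps, +oo[.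
  by apply: mh'; [exact: mD | exact: measurable_itv].
congr (_ `&` _); apply/funext => t /=.
by rewrite in_itv /= andbT.
Qed.

Lemma mu_D : mu D = 1.
Proof.
by rewrite /unit_itv lebesgue_measure_itv /= lte_fin ltr01 sube0.
Qed.

Lemma min_small (g : R -> R) (h : nat -> R -> R) : isL1 g ->
  (forall n, measurable_fun D (h n)) ->
  (forall eps : R, (0 < eps)%R ->
     (fun n => mu (D `&` [set t | (eps < `|h n t|)%R])) @ \oo --> 0) ->
  forall eta : R, (0 < eta)%R -> \forall n \near \oo,
    \int[mu]_(t in D) (Num.min `|g t| `|h n t|)%:E <= eta%:E.
Proof.
move=> ig mh hcvg eta eta0.
have e30 : (0 < eta / 3)%R by rewrite divr_gt0.
have [M M0 HM] := @tail_small g (eta / 3)%R ig e30.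
have mg := isL1_meas ig.
pose c := (eta / 3 / (M + 1))%R.
have c0 : (0 < c)%R by rewrite divr_gt0 // ltr_wpDl.
have := @ev_lt _ 0%R c (hcvg _ e30) c0.
apply: filterS => n hn.
pose A := D `&` [set t | (eta / 3 < `|h n t|)%R].
have mA : measurable A by exact: mAset.
pose tl := fun t => (Num.max (`|g t| - M) 0)%R.
have mtl : measurable_fun D tl.
  apply: measurable_maxr => //.
  by apply: measurable_funB => //; apply: measurableT_comp.
have tl0 : forall t, (0 <= tl t)%R by move=> t; rewrite le_max lexx orbT.
have mI : measurable_fun D (fun t => (indic A t : R)%:E).
  by apply: measurableT_comp => //; exact: measurable_indic.
have mtlE : measurable_fun D (fun t => (tl t)%:E) by apply: measurableT_comp.
have mMI : measurable_fun D (fun t => M%:E * (indic A t : R)%:E).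
  exact: (@emeasurable_funM _ _ _ _ (cst M%:E) _ (measurable_cst _) mI).
have mS : measurable_fun D (fun t => M%:E * (indic A t : R)%:E + (tl t)%:E).
  exact: (@emeasurable_funD _ _ _ _ (fun t => M%:E * (indic A t : R)%:E) _ mMI mtlE).
have mAll : measurable_fun D (fun t => (eta / 3)%:E + (M%:E * (indic A t : R)%:E + (tl t)%:E)).
  exact: (@emeasurable_funD _ _ _ _ (cst (eta / 3)%:E) _ (measurable_cst _) mS).
apply: (@le_trans _ _ (\int[mu]_(t in D)
   ((eta / 3)%:E + ((M%:E * (indic A t : R)%:E) + (tl t)%:E)))).
  apply: ge0_le_integral.
  - exact: mD.
  - by move=> t _; rewrite lee_fin le_min !normr_ge0.
  - have mhn := mh n.
    apply/measurable_EFinP; apply: measurable_minr; exact: measurableT_comp.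
  - exact: mAll.
  move=> t Dt; rewrite -!EFinM -!EFinD lee_fin indicE.
  have [lt|le] := ltP (eta / 3)%R (`|h n t|)%R.
    have -> : t \in A by rewrite inE.
    rewrite mulr1 ge_min; apply/orP; left.
    apply: (@le_trans _ _ (M + tl t)%R); last by apply: ler_wpDl; [exact: ltW|].
    by rewrite /tl -lerBlDl le_max lexx.
  rewrite ge_min; apply/orP; right; apply: (le_trans le).
  by rewrite lerDl addr_ge0 // mulr_ge0 // ler0n.
rewrite ge0_integralD; first last.
- exact: mS.
- by move=> t _; rewrite adde_ge0 // ?mule_ge0 // lee_fin // ler0n.
- by [].
- by move=> t _; rewrite lee_fin ltW.
- exact: mD.
rewrite ge0_integralD; first last.
- exact: mtlE.
- by move=> t _; rewrite lee_fin.
- exact: mMI.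
- by move=> t _; rewrite mule_ge0 // lee_fin // ler0n.
- exact: mD.
rewrite integral_cst; last exact: mD.
set mm := (X in (eta / 3)%:E * X).
have -> : mm = 1 by exact: mu_D.
rewrite mule1 ge0_integralZl; first last.
- by rewrite lee_fin.
- by move=> t _; rewrite lee_fin ler0n.
- exact: mI.
- exact: mD.
rewrite integral_indic; last exact: mA.
  2: exact: mD.
rewrite (_ : A `&` D = A); last by rewrite /A setIAC setIid.
set mA' := (X in M%:E * X).
have hn2 : mA' < c%:E by exact: hn.
have muA0 : 0 <= mA' by exact: measure_ge0.
have muAfin : mA' \is a fin_num.
  by rewrite ge0_fin_numE // (lt_trans hn2) // ltry.
have hn' : (fine mA' <= c)%R.
  by rewrite -lee_fin fineK // ltW.
have Mc : (M * fine mA' <= eta / 3)%R.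
  apply: (le_trans (ler_wpM2l M0 hn')).
  apply: (@le_trans _ _ ((M + 1) * c)%R).
    by rewrite ler_wpM2r ?(ltW c0) // lerDl.
  by rewrite /c mulrC divfK // gt_eqF // ltr_wpDl.
apply: (@le_trans _ _ ((eta/3)%:E + ((eta/3)%:E + (eta/3)%:E))).
  apply: leeD2l; apply: leeD; last exact: HM.
  by rewrite -(fineK muAfin) -EFinM lee_fin.
rewrite -!EFinD lee_fin; lra.
Qed.

Lemma isL1B {f g : R -> R} : isL1 f -> isL1 g -> isL1 (fun t => f t - g t)%R.
Proof. by move=> if_ ig; exact: (eq_integrable mD _ _ _ (integrableB mD if_ ig)). Qed.

Lemma ptwise (a b : R) : (`|a| + `|b| <= `|a - b| + (Num.min `|a| `|b| + Num.min `|a| `|b|))%R.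
Proof.
have [ab|ba] := leP (`|a|)%R (`|b|)%R.
  have m1 : (Num.min `|a| `|b| = `|a|)%R by exact/min_idPl.
  have : (`|b| <= `|a - b| + `|a|)%R.
    by have := ler_normD (b - a)%R a; rewrite subrK distrC.
  lra.
have m1 : (Num.min `|a| `|b| = `|b|)%R by exact/min_idPr/ltW.
have : (`|a| <= `|a - b| + `|b|)%R.
  by have := ler_normD (a - b)%R b; rewrite subrK.
lra.
Qed.

Lemma BL (c x : R -> R) (u : nat -> R -> R) : isL1 c -> isL1 x ->
  (forall n, isL1 (u n)) -> cvg_in_measure u x ->
  forall delta : R, (0 < delta)%R -> \forall n \near \oo,
    L1dist c x + L1dist x (u n) <= L1dist c (u n) + delta%:E.
Proof.
move=> ic ix iu cu delta d0.
have ig := isL1B ic ix.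
have mc := isL1_meas ic; have mx := isL1_meas ix.
have mh : forall n, measurable_fun D (fun t => u n t - x t)%R.
  by move=> n; apply: measurable_funB => //; exact: isL1_meas.
have d20 : (0 < delta / 2)%R by rewrite divr_gt0.
have := @min_small _ (fun n t => u n t - x t)%R ig mh cu _ d20.
apply: filterS => n hn.
have mun := isL1_meas (iu n).
pose mi := fun t => (Num.min `|c t - x t| `|u n t - x t|)%R.
have mmi : measurable_fun D (fun t => (mi t)%:E).
  apply/measurable_EFinP; apply: measurable_minr.
    by apply: measurableT_comp => //; exact: measurable_funB.
  by apply: measurableT_comp => //; exact: mh.
have mi0 : forall t, D t -> 0 <= (mi t)%:E.
  by move=> t _; rewrite lee_fin le_min !normr_ge0.
rewrite /L1dist -ge0_integralD; first last.
- exact: mabsB.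
- by move=> t _; rewrite lee_fin.
- exact: mabsB.
- by move=> t _; rewrite lee_fin.
- exact: mD.
apply: (@le_trans _ _ (\int[mu]_(t in D) ((`|c t - u n t|)%:E + ((mi t)%:E + (mi t)%:E)))).
  apply: ge0_le_integral.
  - exact: mD.
  - by move=> t _; rewrite adde_ge0 // lee_fin.
  - by apply: emeasurable_funD; exact: mabsB.
  - apply: emeasurable_funD; first exact: mabsB.
    exact: emeasurable_funD.
  move=> t _; rewrite -!EFinD lee_fin /mi.
  have := ptwise (c t - x t) (u n t - x t).
  by rewrite (_ : c t - x t - (u n t - x t) = c t - u n t)%R ?(distrC (x t)) //; ring.
rewrite ge0_integralD; first last.
- exact: emeasurable_funD.
- by move=> t Dt; rewrite adde_ge0 // mi0.
- exact: mabsB.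
- by move=> t _; rewrite lee_fin.
- exact: mD.
rewrite ge0_integralD //; last exact: mD.
apply: leeD2l.
have -> : delta = (delta / 2 + delta / 2)%R by field.
by rewrite EFinD; apply: leeD.
Qed.

Lemma sub_closure (C : set (R -> R)) c : C c -> isL1 c -> tau_closure C c.
Proof.
move=> Cc ic; split => //; exists (fun _ => c); split => // eps e0.
apply: cvg_near_cst; apply: nearW => n.
rewrite (_ : _ `&` _ = set0) ?measure0 //.
apply/seteqP; split => t //= [_]; rewrite subrr normr0.
by rewrite ltNge (ltW e0).
Qed.

Lemma part1 (C : set (R -> R)) : (forall c, C c -> isL1 c) ->
  forall x, tau_closure C x -> setdist x C <= diam C * (2^-1)%:E.
Proof.
move=> hC x [ix [u [uC cu]]].
have iu n := hC _ (uC n).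
set d := setdist x C.
have dle n : d <= L1dist x (u n) by apply: ereal_inf_lbound; exists (u n).
have d0 : 0 <= d.
  by apply: le_ereal_inf_tmp => _ [a Ca <-]; exact: L1dist_ge0.
have dfin : d \is a fin_num.
  rewrite ge0_fin_numE //; apply: (le_lt_trans (dle 0%N)).
  by rewrite ltey_eq L1dist_fin.
have diam_ge n m : L1dist (u n) (u m) <= diam C.
  by apply: ereal_sup_ubound; exists (u n), (u m).
have key : d + d <= diam C.
  apply/lee_addgt0Pr => e e0.
  have [N _ HN] := @BL (u 0%N) x u (iu 0%N) ix iu cu e e0.
  apply: (le_trans _ (le_trans (HN N (leqnn N)) _)).
    by apply: leeD; [rewrite L1dist_sym; exact: dle | exact: dle].
  exact: leeD2r.
move: key; rewrite -(fineK dfin); case: (diam C) => [r | | ] //=.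
- rewrite -EFinD -EFinM !lee_fin => h; lra.
- by move=> _; rewrite mulyr gtr0_sg ?invr_gt0 // mul1e leey.
Qed.

Lemma L1dist_same (f : R -> R) : L1dist f f = 0.
Proof.
rewrite /L1dist (eq_integral (fun _ => 0)) ?integral0 // => t _.
by rewrite subrr normr0.
Qed.

Lemma adm2 (C : set (R -> R)) : (forall c, C c -> isL1 c) -> t_admissible C 2.
Proof.
move=> hC; split => // u x uC ix cu.
have iu n := hC _ (uC n).
set L := limn_esup _.
have L0 : 0 <= L by apply: LS0 => n; exact: L1dist_ge0.
move: L0; case hL : L => [r | | ] //= r0; last first.
  by rewrite mulry gtr0_sg // mul1e leey.
apply/lee_addgt0Pr => e e0.
have e20 : (0 < e / 2)%R by rewrite divr_gt0.
have [N HN] : exists N, forall n, (N <= n)%N -> L1dist x (u n) < (r + e / 2)%:E.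
  apply: LS2; rewrite -/L hL lte_fin ltrDl //.
have ge : ereal_inf [set limn_esup (fun n => L1dist c (u n)) | c in C] <=
    limn_esup (fun n => L1dist (u N) (u n)).
  by apply: ereal_inf_lbound; exists (u N).
apply: (le_trans ge); apply: (@LS1 _ _ _ N) => n Nn.
have T := @L1dist_tri (u N) x (u n) (isL1_meas (iu N)) (isL1_meas ix) (isL1_meas (iu n)).
apply: (le_trans T); rewrite L1dist_sym.
apply: (@le_trans _ _ ((r + e / 2)%:E + (r + e / 2)%:E)).
  by apply: leeD; apply: ltW; apply: HN.
rewrite -EFinD -EFinM lee_fin; lra.
Qed.

Lemma adm_ge2 (C : set (R -> R)) (Dr : R) : (forall c, C c -> isL1 c) ->
  (0 < Dr)%R -> diam C = Dr%:E ->
  (forall eps : R, (0 < eps)%R ->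
     exists2 x, tau_closure C x & ((Dr / 2 - eps)%:E < setdist x C)) ->
  forall l, t_admissible C l -> (2 <= l)%R.
Proof.
move=> hC D0 hD hS l [l0 hl].
rewrite leNgt; apply/negP => l2.
pose eps := (Dr * (2 - l) / 8)%R.
have eps0 : (0 < eps)%R by rewrite /eps divr_gt0 // mulr_gt0 // subr_gt0.
have [x xcl dx] := hS eps eps0.
move: (xcl) => [ix [u [uC cu]]].
have iu n := hC _ (uC n).
set d := setdist x C.
have dle n : d <= L1dist x (u n) by apply: ereal_inf_lbound; exists (u n).
have d0 : 0 <= d.
  by apply: le_ereal_inf_tmp => _ [a Ca <-]; exact: L1dist_ge0.
have dfin : d \is a fin_num.
  rewrite ge0_fin_numE //; apply: (le_lt_trans (dle 0%N)).
  by rewrite ltey_eq L1dist_fin.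
set L := limn_esup (fun n => L1dist x (u n)).
have dL : d <= L by apply: LS0.
have LD : L <= (Dr - fine d)%:E.
  apply/lee_addgt0Pr => e e0.
  have [N _ HN] := @BL (u 0%N) x u (iu 0%N) ix iu cu e e0.
  apply: (@LS1 _ _ _ N) => n Nn.
  have h1 := HN n Nn.
  have h2 : L1dist (u 0%N) (u n) <= Dr%:E.
    by rewrite -hD; apply: ereal_sup_ubound; exists (u 0%N), (u n).
  have h3 : d <= L1dist (u 0%N) x by rewrite L1dist_sym; exact: dle.
  move: h1 h2 h3.
  rewrite -(fineK (L1dist_fin (iu 0%N) ix)) -(fineK (L1dist_fin ix (iu n))).
  rewrite -(fineK (L1dist_fin (iu 0%N) (iu n))) -(fineK dfin).
  rewrite -!EFinD !lee_fin => h1 h2 h3; lra.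
have Lfin : L \is a fin_num.
  rewrite fin_numElt (lt_le_trans _ (le_trans d0 dL)) ?ltNy0 //=.
  by rewrite (le_lt_trans LD) // ltry.
have key : d + L <= l%:E * L.
  apply: le_trans (hl u x uC ix cu).
  apply: le_ereal_inf_tmp => _ [c Cc <-].
  apply/lee_addgt0Pr => e e0.
  have ic := hC _ Cc.
  have [N _ HN] := @BL c x u ic ix iu cu e e0.
  have h : (fine d - e)%:E + L <= limn_esup (fun n => L1dist c (u n)).
    apply: (@LS3 _ _ _ _ N) => n Nn.
    have h1 := HN n Nn.
    have h3 : d <= L1dist c x.
      by rewrite L1dist_sym; apply: ereal_inf_lbound; exists c.
    move: h1 h3.
    rewrite -(fineK (L1dist_fin ic ix)) -(fineK (L1dist_fin ix (iu n))).
    rewrite -(fineK (L1dist_fin ic (iu n))) -(fineK dfin).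
    rewrite -!EFinD !lee_fin => h1 h3; lra.
  apply: (le_trans _ (leeD2r e%:E h)).
  rewrite -(fineK dfin) -(fineK Lfin) -!EFinD lee_fin; lra.
move: key dL LD dx.
rewrite -/d -(fineK dfin) -(fineK Lfin) -EFinD -EFinM !lee_fin lte_fin.
set fd := fine d; set fL := fine L => key dL LD dx.
have e4 : (eps <= Dr / 4)%R by rewrite /eps; nra.
have fd0 : (0 < fd)%R by lra.
have l1 : (1 < l)%R by nra.
have {}LD : (fL <= Dr - fd)%R by exact: LD.
have q : (0 <= (l - 1) * (Dr - fd - fL))%R by apply: mulr_ge0; lra.
have s3 : (fd <= (l - 1) * (Dr - fd))%R by nra.
have s5 : ((Dr / 2 - eps) * l < fd * l)%R by rewrite ltr_pM2r //; lra.
have p : (0 < Dr * ((2 - l) * (4 - l)))%R.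
  by rewrite mulr_gt0 // mulr_gt0 // subr_gt0 //; lra.
move: s5; rewrite /eps => s5.
nra.
Qed.
End L1.

Theorem mainTheorem1 (R : realType) (C : set (R -> R)) :
  (forall c, C c -> isL1 c) ->
  norm_closed C -> convexC C -> L1bounded C ->
  (hausdorff C (tau_closure C) <= diam C * (2^-1)%:E)%E /\
  ((0 < diam C)%E ->
   hausdorff C (tau_closure C) = (diam C * (2^-1)%:E)%E ->
   t_coef C = 2%:E).
Proof.
move=> hC nc cv bd.
have S1le : forall a, C a -> (setdist a (tau_closure C) <= 0)%E.
  move=> a Ca; rewrite -(L1dist_same a); apply: ereal_inf_lbound.
  by exists a => //; exact: sub_closure Ca (hC _ Ca).
have S1le' : (ereal_sup [set setdist a (tau_closure C) | a in C] <= 0)%E.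
  by apply: ge_ereal_sup => _ [a Ca <-]; exact: S1le.
have S2le : (ereal_sup [set setdist b C | b in tau_closure C] <= diam C * (2^-1)%:E)%E.
  by apply: ge_ereal_sup => _ [b clb <-]; exact: part1.
split.
  rewrite /hausdorff ge_max S2le andbT.
  case: (pselect (exists a, C a)) => [[a Ca]|nC].
    apply: (le_trans S1le').
    apply: mule_ge0 => //; rewrite -(L1dist_same a).
    by apply: ereal_sup_ubound; exists a, a.
  rewrite (_ : [set _ | _ in C] = set0) ?ereal_sup0 ?leNye //.
  by apply/seteqP; split => // d [a Ca _]; apply: nC; exists a.
move=> hd hH.
have [M hM] := bd.
have diamle : (diam C <= (M + M)%:E)%E.
  apply: ge_ereal_sup => _ [a [b [Ca [Cb ->]]]].
  have T := @L1dist_tri R a (fun _ => 0%R) b (isL1_meas (hC _ Ca))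
    (measurable_cst _) (isL1_meas (hC _ Cb)).
  apply: (le_trans T); rewrite EFinD; apply: leeD; first exact: hM.
  by rewrite L1dist_sym; exact: hM.
have dfin : diam C \is a fin_num.
  rewrite fin_numElt (lt_trans _ hd) ?ltNy0 //=.
  by rewrite (le_lt_trans diamle) // ltry.
set Dr := fine (diam C).
have hD : diam C = Dr%:E by rewrite fineK.
have D0 : (0 < Dr)%R by rewrite -lte_fin -hD.
have hS : forall eps : R, (0 < eps)%R ->
    exists2 x, tau_closure C x & ((Dr / 2 - eps)%:E < setdist x C)%E.
  move=> eps e0.
  have h2 : ((Dr * 2^-1)%:E <= ereal_sup [set setdist b C | b in tau_closure C])%E.
    have := le_refl ((Dr * 2^-1)%:E : \bar R).
    rewrite [X in (_ <= X)%E -> _]EFinM -hD -[X in (_ <= X)%E -> _]hH /hausdorff le_max.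
    case/orP => // h.
    have := le_trans h S1le'; rewrite lee_fin => h0.
    have : (0 < Dr * 2^-1)%R by rewrite mulr_gt0 // invr_gt0.
    by rewrite ltNge h0.
  have := lt_le_trans _ h2 => /(_ (Dr / 2 - eps)%:E).
  rewrite lte_fin ltrBlDr ltrDl e0 => /(_ isT) /ereal_sup_gt [_ [b clb <-] hb].
  by exists b.
apply/eqP; rewrite eq_le; apply/andP; split.
  by apply: ereal_inf_lbound; exists 2%R => //; exact: adm2.
apply: le_ereal_inf_tmp => _ [l hl <-]; rewrite lee_fin.
exact: (@adm_ge2 R C Dr hC D0 hD hS l hl).
Qed.
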